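(* Let $X$ be a set, let $\mathcal{L}$ be a nest on $X$, and let $Y\subseteq X$. Then $X={\uparrow}Y$ if and only if there exists a subfamily $\mathcal{L}'=\{L_i : i\in I\}\subseteq\mathcal{L}$ with $\bigcap_{i\in I}L_i=\emptyset$ such that $Y\cap L_i\neq\emptyset$ for every $i\in I$.
   Context: A nest on $X$ is a family of subsets of $X$ totally ordered by inclusion. Define $x\triangleleft_{\mathcal{L}} y$ iff there exists $L\in\mathcal{L}$ with $x\in L$ and $y\notin L$. For $Y\subseteq X$, ${\uparrow}Y=\{x\in X : \exists y\in Y,\ y\triangleleft_{\mathcal{L}} x\}$. *)

(* Defs.v *)
From mathcomp Require Import all_boot.
From mathcomp Require Import classical_sets.
Set Implicit Arguments. Unset Strict Implicit. Unset Printing Implicit Defensive.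
Local Open Scope classical_set_scope.

Definition nest (X : Type) (L : set (set X)) : Prop :=
  forall A B, L A -> L B -> A `<=` B \/ B `<=` A.

Definition nest_rel (X : Type) (L : set (set X)) (x y : X) : Prop :=
  exists2 A, L A & A x /\ ~ A y.

Definition nest_up (X : Type) (L : set (set X)) (Y : set X) : set X :=
  [set x | exists2 y, Y y & nest_rel L y x].

(* Main.v *)
Require Import Defs.
From mathcomp Require Import all_boot.
From mathcomp Require Import boolp classical_sets.
Local Open Scope classical_set_scope.

Theorem proposition4p3 (X : Type) (L : set (set X)) (Y : set X) :
  nest L ->
  (nest_up L Y = setT <->
   exists2 L' : set (set X), L' `<=` L &
     \bigcap_(A in L') A = set0 /\ (forall A, L' A -> Y `&` A !=set0)).
Proof.
move=> _; split.
- move=> hup.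
  exists [set A | L A /\ Y `&` A !=set0]; first by move=> A [].
  split; last by move=> A [].
  apply/seteqP; split => // x hx.
  have : nest_up L Y x by rewrite hup.
  case=> y Yy [A LA [Ay nAx]].
  exfalso; apply: nAx; apply: hx; split => //; by exists y.
- case=> L' sL [hcap hY].
  apply/seteqP; split => // x _.
  have [[A [L'A nAx]] | hall] := pselect (exists A, L' A /\ ~ A x).
  + have [y [Yy Ay]] := hY A L'A.
    exists y => //; exists A; [exact: sL | by []].
  + have : (\bigcap_(A in L') A) x.
      move=> A L'A; apply: contrapT => nAx; apply: hall; by exists A.
    by rewrite hcap.
Qed.
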